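(* Fix integers $1\le m\le n$ and $f\in[0,1/2]$. Then $q\mapsto q^2/v(q)$ is an increasing function of the integer $q$ on $1\le q\le 2^n$.
   Context: For $n,m$, $f$ and integer $1\le q\le 2^n+1$ define $w^*(n,q)=\max\{w\ge0:\sum_{j=1}^w\binom{n}{j}\le q-1\}$, $r(n,q)=q-1-\sum_{w=1}^{w^*(n,q)}\binom{n}{w}$, and $$(q-1)\,\epsilon(n,m,q,f)=\sum_{w=1}^{w^*(n,q)}\binom{n}{w}\frac{1}{2^m}(1+(1-2f)^w)^m+\frac{r(n,q)}{2^m}(1+(1-2f)^{w^*(n,q)+1})^m$$ (so $\epsilon(n,m,q,f)$ is this bracket divided by $q-1$ when $q\ge2$). Define $$v(q)=\frac{q}{2^m}\left(1+\epsilon(n,m,q,f)\cdot(q-1)-\frac{q}{2^m}\right).$$ *)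

(* Defs.v *)
From mathcomp Require Import all_boot all_order all_algebra.
Set Implicit Arguments. Unset Strict Implicit. Unset Printing Implicit Defensive.
Import Order.TTheory GRing.Theory Num.Theory.
Local Open Scope ring_scope.

(* w^*(n,q) = max { w >= 0 : sum_{j=1}^w C(n,j) <= q-1 }, with w ranging
   over 0..n (for w > n the sum no longer grows, so the paper's max is only
   meaningful with w <= n; for q = 2^n, 2^n+1 this gives w^* = n, r = 0). *)
Definition wstar (n q : nat) : nat :=
  (\max_(w < n.+1 | (\sum_(1 <= j < w.+1) 'C(n, j) <= q.-1)%N) (w : nat))%N.

Definition rres (n q : nat) : nat :=
  (q.-1 - \sum_(1 <= w < (wstar n q).+1) 'C(n, w))%N.

Definition eps_bracket {R : realFieldType} (n m q : nat) (f : R) : R :=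
  \sum_(1 <= w < (wstar n q).+1)
      'C(n, w)%:R * (1 / 2 ^+ m) * (1 + (1 - 2 * f) ^+ w) ^+ m
  + (rres n q)%:R / 2 ^+ m * (1 + (1 - 2 * f) ^+ (wstar n q).+1) ^+ m.

Definition eps {R : realFieldType} (n m q : nat) (f : R) : R :=
  eps_bracket n m q f / (q.-1)%:R.

Definition v {R : realFieldType} (n m : nat) (f : R) (q : nat) : R :=
  q%:R / 2 ^+ m * (1 + eps n m q f * (q.-1)%:R - q%:R / 2 ^+ m).

(* Main.v *)
Require Import Defs.
From mathcomp Require Import all_boot all_order all_algebra.
From mathcomp Require Import ring lra zify.
Import Order.TTheory GRing.Theory Num.Theory.
Local Open Scope ring_scope.

Definition Ssum (n w : nat) : nat := (\sum_(1 <= j < w.+1) 'C(n, j))%N.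

Lemma SsumS n w : Ssum n w.+1 = (Ssum n w + 'C(n, w.+1))%N.
Proof. by rewrite /Ssum big_nat_recr. Qed.

Lemma Ssum0 n : Ssum n 0 = 0%N.
Proof. by rewrite /Ssum big_geq. Qed.

Lemma Ssum_mono n w1 w2 : (w1 <= w2)%N -> (Ssum n w1 <= Ssum n w2)%N.
Proof.
apply: (homo_leq (r := leq)) => //; first by move=> ? ? ?; apply: leq_trans.
by move=> i; rewrite SsumS leq_addr.
Qed.

Lemma Ssum_n n : (Ssum n n).+1 = (2 ^ n)%N.
Proof.
have := expnDn 1 1 n; rewrite addn1 => ->.
rewrite /Ssum -(big_mkord xpredT (fun i => 'C(n, i) * (1 ^ (n - i) * 1 ^ i)))%N.
rewrite [RHS]big_ltn // bin0 !exp1n muln1 add1n; congr (_.+1).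
by apply: eq_big_nat => i _; rewrite !exp1n !muln1.
Qed.

Lemma wstar_spec n t w : (w <= n)%N -> (Ssum n w <= t)%N ->
  (w = n \/ t < Ssum n w.+1)%N -> wstar n t.+1 = w.
Proof.
move=> Hwn Hwt Hor; apply/eqP; rewrite eqn_leq; apply/andP; split.
  apply/bigmax_leqP => i Hi; rewrite leqNgt; apply/negP => Hlt.
  have Hi' : (i <= n)%N by rewrite -ltnS ltn_ord.
  case: Hor => [Hw|Ht]; first by subst w; move: (leq_trans Hlt Hi'); rewrite ltnn.
  move: (@Ssum_mono n _ _ Hlt) => H; rewrite -/(Ssum n i) /= in Hi.
  lia.
have Hw : (w < n.+1)%N by [].
exact: (@leq_bigmax_cond _ (fun i : 'I_n.+1 => (\sum_(1 <= j < i.+1) 'C(n, j) <= t.+1.-1)%N) (fun i => nat_of_ord i) (Ordinal Hw) Hwt).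
Qed.

Lemma wstar_props n q : (wstar n q <= n)%N /\ (Ssum n (wstar n q) <= q.-1)%N /\
  ((wstar n q < n)%N -> (q.-1 < Ssum n (wstar n q).+1)%N).
Proof.
have Hc : (0 < #|[pred i : 'I_n.+1 | (Ssum n i <= q.-1)%N]|)%N.
  by apply/card_gt0P; exists ord0; rewrite inE /= Ssum0.
have [i0 Hi0 Heq] := eq_bigmax_cond (fun i : 'I_n.+1 => nat_of_ord i) Hc.
have -> : wstar n q = i0 by exact: Heq.
split; first by rewrite -ltnS ltn_ord.
split; first by move: Hi0; rewrite inE.
move=> Hlt; rewrite ltnNge; apply/negP => Hle.
have Hw : ((i0.+1) < n.+1)%N by [].
have := (@leq_bigmax_cond _ (fun i : 'I_n.+1 => (\sum_(1 <= j < i.+1) 'C(n, j) <= q.-1)%N) (fun i => nat_of_ord i) (Ordinal Hw) Hle).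
by rewrite -/(wstar n q) (_ : wstar n q = i0) //= ltnn.
Qed.
Lemma step_real (R : realFieldType) (Q B c E : R) : 1 <= Q -> 0 < E -> E < 1 -> E <= c -> c <= 1 -> (Q-1)*c <= B ->
  Q^+2 / (Q * E * (1 + B - Q * E)) <= (Q+1)^+2 / ((Q+1) * E * (1 + (B + c) - (Q+1) * E)).
Proof.
move=> HQ HE HE1 Hc Hc1 HB.
have D1 : 0 < 1 + B - Q*E by nra.
have D2 : 0 < 1 + (B + c) - (Q+1)*E by nra.
have key : Q * (1 + (B + c) - (Q+1)*E) <= (Q+1) * (1 + B - Q*E) by nra.
have P : 0 <= Q*(Q+1)*E by apply: mulr_ge0; [apply: mulr_ge0|]; lra.
have Hb : 0 < Q * E * (1 + B - Q * E) by apply: mulr_gt0; [apply: mulr_gt0|]; lra.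
have Hd : 0 < (Q+1) * E * (1 + (B + c) - (Q+1) * E) by apply: mulr_gt0; [apply: mulr_gt0|]; lra.
rewrite ler_pdivlMr // mulrAC ler_pdivrMr //.
have := ler_wpM2l P key; rewrite !expr2; lra.
Qed.
Section Real.
Variable R : realFieldType.
Variables (n m : nat) (f : R).
Hypothesis Hm : (1 <= m)%N.
Hypothesis Hf0 : 0 <= f.
Hypothesis Hf1 : f <= 1 / 2.

Definition a (j : nat) : R := (1 + (1 - 2 * f) ^+ j) ^+ m / 2 ^+ m.
Let x := 1 - 2 * f.
Lemma x0 : 0 <= x. Proof. have A := Hf1; rewrite /x; lra. Qed.
Lemma x1 : x <= 1. Proof. have A := Hf0; rewrite /x; lra. Qed.

Lemma e_pos : 0 < (2 ^+ m : R)^-1.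
Proof. by rewrite invr_gt0 exprn_gt0. Qed.
Lemma e_lt1 : (2 ^+ m : R)^-1 < 1.
Proof. rewrite invf_lt1 ?exprn_gt0 // exprn_egt1 //; first by rewrite -lt0n. by rewrite ltr1n. Qed.

Lemma a_le1 j : a j <= 1.
Proof.
rewrite /a ler_pdivrMr ?exprn_gt0 // mul1r.
apply: lerXn2r; rewrite ?inE ?nnegrE /=.
- have := exprn_ge0 j x0; rewrite /x; lra.
- lra.
- have := exprn_ile1 j x0 x1; rewrite /x; lra.
Qed.

Lemma a_gee j : (2 ^+ m : R)^-1 <= a j.
Proof.
rewrite /a -[X in X <= _]mul1r ler_pM2r ?e_pos //.
apply: exprn_ege1; have := exprn_ge0 j x0; rewrite /x; lra.
Qed.

Lemma a_S j : a j.+1 <= a j.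
Proof.
rewrite /a ler_pM2r ?e_pos //.
apply: lerXn2r; rewrite ?inE ?nnegrE /=.
- have := exprn_ge0 j.+1 x0; rewrite /x; lra.
- have := exprn_ge0 j x0; rewrite /x; lra.
- rewrite exprS -/x; have := exprn_ge0 j x0; have := x0; have := x1; nra.
Qed.

Lemma a_mono j k : (j <= k)%N -> a k <= a j.
Proof.
move=> H; rewrite -(subnK H); elim: (k - j)%N => [|d IH]; first by rewrite add0n.
by rewrite addSn; apply: le_trans (a_S _) IH.
Qed.

Definition T (w : nat) : R := \sum_(1 <= j < w.+1) 'C(n, j)%:R * a j.
Definition F (w t : nat) : R := T w + (t - Ssum n w)%:R * a w.+1.

Lemma epsbE q : eps_bracket n m q f = F (wstar n q) q.-1.
Proof.
rewrite /eps_bracket /F /T /rres; congr (_ + _).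
  by apply: eq_bigr => j _; rewrite /a mul1r -mulrA [_^-1 * _]mulrC.
by rewrite /a -mulrA [_^-1 * _]mulrC.
Qed.

Lemma TS w : T w.+1 = T w + 'C(n, w.+1)%:R * a w.+1.
Proof. by rewrite /T big_nat_recr. Qed.

Lemma F_lb w t : (Ssum n w <= t)%N -> t%:R * a w.+1 <= F w t.
Proof.
move=> H; rewrite /F -{1}(subnK H) natrD mulrDl [X in _ <= X]addrC lerD2l.
rewrite /T /Ssum natr_sum mulr_suml; apply: ler_sum_nat => j /andP [_ Hj].
by rewrite ler_wpM2l ?ler0n //; apply: a_mono; apply: ltnW.
Qed.

Lemma epsb_step q : (1 <= q)%N -> (q < 2 ^ n)%N ->
  eps_bracket n m q.+1 f = eps_bracket n m q f + a (wstar n q).+1.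
Proof.
move=> Hq Hqn; rewrite !epsbE /=.
have [Hw [HS Hlt]] := wstar_props n q.
set w := wstar n q in Hw HS Hlt *.
have Hwn : (w < n)%N.
  rewrite ltn_neqAle Hw andbT; apply/eqP => E.
  move: HS; rewrite E => HS; have := Ssum_n n; lia.
have Ht := Hlt Hwn.
case: (ltnP q (Ssum n w.+1)) => Hc.
  have -> : wstar n q.+1 = w by apply: wstar_spec => //; [lia | right].
  rewrite /F.
  have -> : (q - Ssum n w = (q.-1 - Ssum n w).+1)%N by lia.
  by rewrite -addn1 natrD mulrDl mul1r addrA.
have -> : wstar n q.+1 = w.+1.
  apply: wstar_spec; [exact: Hwn | exact: Hc | ].
  case: (ltnP w.+1 n) => Hw1; last by left; lia.
  right; rewrite SsumS; have : (0 < 'C(n, w.+2))%N by rewrite bin_gt0.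
  lia.
rewrite /F TS.
have -> : (q - Ssum n w.+1 = 0)%N by lia.
have E : ((q.-1 - Ssum n w).+1 = 'C(n, w.+1))%N by move: (SsumS n w); lia.
by rewrite -E mul0r addr0 -addn1 natrD mulrDl mul1r addrA.
Qed.

Lemma epsE q : (1 <= q)%N -> (1 <= n)%N ->
  eps n m q f * (q.-1)%:R = eps_bracket n m q f.
Proof.
move=> Hq Hn; case: q Hq => [//|[|q]] _.
  rewrite mulr0 epsbE /=.
  have -> : wstar n 1 = 0%N.
    apply: wstar_spec => //; first by rewrite Ssum0.
    by right; rewrite SsumS Ssum0 bin1.
  by rewrite /F /T big_geq // Ssum0 mul0r addr0.
by rewrite /eps mulfVK // pnatr_eq0.
Qed.

Lemma g_step q : (1 <= q)%N -> (q < 2 ^ n)%N ->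
  q%:R ^+ 2 / v n m f q <= (q.+1)%:R ^+ 2 / v n m f q.+1.
Proof.
move=> Hq Hqn.
have Hn : (1 <= n)%N by case: n Hqn => //; case: q Hq.
rewrite /v !epsE // epsb_step //.
have -> : (q.+1)%:R = q%:R + 1 :> R by rewrite -addn1 natrD.
apply: step_real.
- by rewrite ler1n.
- exact: e_pos.
- exact: e_lt1.
- exact: a_gee.
- exact: a_le1.
have [_ [HS _]] := wstar_props n q.
have <- : (q.-1)%:R = q%:R - 1 :> R by rewrite -{2}(prednK Hq) -addn1 natrD addrK.
rewrite epsbE; exact: F_lb.
Qed.

End Real.

Theorem lemma2 (R : realFieldType) (n m : nat) (f : R) :
  (1 <= m)%N -> (m <= n)%N -> 0 <= f -> f <= 1 / 2 ->
  forall q1 q2 : nat, (1 <= q1)%N -> (q1 <= q2)%N -> (q2 <= 2 ^ n)%N ->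
    (q1%:R ^+ 2) / v n m f q1 <= (q2%:R ^+ 2) / v n m f q2.
Proof.
move=> Hm Hmn Hf0 Hf1 q1 q2 H1 H12 H2.
rewrite -(subnK H12) in H2 *.
elim: (q2 - q1)%N H2 => [|k IH] H2; first by rewrite add0n.
apply: le_trans (IH _) _; first lia.
rewrite addSn; apply: g_step => //; lia.
Qed.
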